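(* Let $V\subset\mathbb{R}^d$ be a finite antichain, $p\in S_V$, and $v\in D_p$ with $p_i=v_i$. Then $v$ is an $i$-witness for $p$ if and only if there is no minimum $w\in V$ such that $w_i<v_i=p_i$ and, for every $j\neq i$, either $w_j\le v_j$ or $w_j<p_j$.
   Context: For $x,y\in\mathbb{R}^d$, $x\le y$ (dominance order) means $x_i\le y_i$ for all $i$; $y\rhd x$ means $y_i>x_i$ for all $i$; $y\rhd_i x$ means $y_i=x_i$ and $y_j>x_j$ for all $j\neq i$. $V\subset\mathbb{R}^d$ is a finite antichain in the dominance order (elements are called minima). The orthogonal surface $S_V$ is the topological boundary of $\langle V\rangle=\{x: x\ge v\text{ for some }v\in V\}$; equivalently $p\in S_V$ iff there is $v\in V$ with $v\le p$ and no $w\in V$ with $p\rhd w$. For $p\in S_V$, $D_p=\{v\in V:v\le p\}$. For $p\in S_V$, a minimum $v\in D_p$ is an $i$-witness for $p$ if there is $q\in S_V$ with $v\le p\le q$ and $q\rhd_i v$. *)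

(* Defs.v *)
From mathcomp Require Import all_boot all_order all_algebra.
Set Implicit Arguments. Unset Strict Implicit. Unset Printing Implicit Defensive.
Import Order.TTheory GRing.Theory Num.Theory.
Local Open Scope ring_scope.

Section Ortho.
Variables (R : realFieldType) (d : nat).
Notation pt := 'rV[R]_d.

Definition dom_le (x y : pt) : Prop := forall i : 'I_d, x 0 i <= y 0 i.
Definition dom_gt (y x : pt) : Prop := forall i : 'I_d, x 0 i < y 0 i.
Definition dom_gt_at (i : 'I_d) (y x : pt) : Prop :=
  y 0 i = x 0 i /\ forall j : 'I_d, j != i -> x 0 j < y 0 j.

Definition antichain (V : seq pt) : Prop :=
  forall v w, v \in V -> w \in V -> dom_le v w -> v = w.

Definition on_surface (V : seq pt) (p : pt) : Prop :=
  (exists2 v, v \in V & dom_le v p) /\ ~ (exists2 w, w \in V & dom_gt p w).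

Definition Dp (V : seq pt) (p : pt) (v : pt) : Prop := v \in V /\ dom_le v p.

Definition witness (V : seq pt) (i : 'I_d) (p v : pt) : Prop :=
  Dp V p v /\ exists q : pt, on_surface V q /\ dom_le v p /\ dom_le p q /\ dom_gt_at i q v.

End Ortho.

(* Main.v *)
Require Import Defs.
From mathcomp Require Import all_boot all_order all_algebra.
Import Order.TTheory GRing.Theory Num.Theory.
Local Open Scope ring_scope.

Lemma exists_delta (R : realFieldType) (T : eqType) (s : seq T) (f : T -> R) :
  exists2 e : R, 0 < e & forall x, x \in s -> 0 < f x -> e <= f x.
Proof.
elim: s => [|x s [e e0 He]]; first by exists 1 => //.
case: (ltP 0 (f x)) => hx.
  exists (Num.min e (f x)); first by rewrite lt_min e0 hx.
  move=> y; rewrite inE => /orP [/eqP -> _|ys fy]; first by rewrite ge_min lexx orbT.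
  by rewrite ge_min He.
exists e => // y; rewrite inE => /orP [/eqP -> fy|ys fy]; last exact: He.
by move: (lt_le_trans fy hx); rewrite ltxx.
Qed.

Theorem corollary4p4 (R : realFieldType) (d : nat) (V : seq 'rV[R]_d)
  (p v : 'rV[R]_d) (i : 'I_d) :
  antichain V -> on_surface V p -> Dp V p v -> p 0 i = v 0 i ->
  (witness V i p v <->
   ~ (exists2 w, w \in V &
        w 0 i < v 0 i /\
        forall j : 'I_d, j != i -> (w 0 j <= v 0 j \/ w 0 j < p 0 j))).
Proof.
move=> _ _ [vV vp] pi; split.
  move=> [_ [q [[_ qs] [_ [pq [qi qj]]]]]] [w wV [wi wj]].
  apply: qs; exists w => // j.
  case: (eqVneq j i) => [->|ji]; first by rewrite qi.
  case: (wj j ji) => h; first exact: le_lt_trans h (qj j ji).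
  exact: lt_le_trans h (pq j).
move=> H; split; first by [].
have [e e0 He] := @exists_delta R _
  [seq (w, j) | w <- V, j <- enum 'I_d] (fun x => x.1 0 x.2 - p 0 x.2).
pose q : 'rV[R]_d := \row_j (if j == i then p 0 i
   else if v 0 j < p 0 j then p 0 j else p 0 j + e).
have qE j : q 0 j = (if j == i then p 0 i
   else if v 0 j < p 0 j then p 0 j else p 0 j + e) by rewrite mxE.
have pq : dom_le p q.
  move=> j; rewrite qE; case: (eqVneq j i) => [->|_] //.
  case: ifP => _ //; by rewrite lerDl ltW.
exists q; split; last split => //; last split => //.
  split; first by exists v => //; move=> j; exact: le_trans (vp j) (pq j).
  move=> [w wV wq]; apply: H; exists w => //; split.
    by rewrite -pi; move: (wq i); rewrite qE eqxx.
  move=> j ji; case: (leP (w 0 j) (v 0 j)) => hv; first by left.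
  case: (ltP (w 0 j) (p 0 j)) => hp; first by right.
  exfalso; move: (wq j); rewrite qE (negbTE ji).
  case: ifP => hvp; first by rewrite ltNge hp.
  have pv : p 0 j = v 0 j.
    by apply/eqP; rewrite eq_le vp /= leNgt hvp.
  have : e <= w 0 j - p 0 j.
    apply: (He (w, j)); first by apply: allpairs_f => //; rewrite mem_enum.
    by rewrite subr_gt0 pv.
  by rewrite lerBrDl ltNge => ->.
split; first by rewrite qE eqxx.
move=> j ji; rewrite qE (negbTE ji); case: ifP => // h.
have pv : p 0 j = v 0 j by apply/eqP; rewrite eq_le vp /= leNgt h.
by rewrite pv ltrDl.
Qed.
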